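(* ($\Rightarrow_{\mathrm{AP}}$ is a Terminating Over-Approximation.) Let $N$ be a finite set of constrained clauses. (i) There is no infinite sequence $N=N_0\Rightarrow_{\mathrm{AP}}N_1\Rightarrow_{\mathrm{AP}}N_2\Rightarrow_{\mathrm{AP}}\cdots$ (i.e. $\Rightarrow_{\mathrm{AP}}^*$ terminates). (ii) If $N\Rightarrow_{\mathrm{AP}}N'$ and $N'$ is satisfiable, then $N$ is satisfiable.
   Context: Clauses are written $\Gamma\rightarrow\Delta$ with $\Gamma,\Delta$ finite multisets of atoms (negative resp. positive literals); $\dot\cup$ denotes disjoint union. For an atom or term $E$, $E[s]_p$ means $E|_p=s$ and $E[p/s']$ the result of replacing the subterm at position $p$ by $s'$; $E[x]_{p,q}$ means $x$ occurs at positions $p$ and $q$. A term is complex if it is not a variable. A variable and a constant are straight; $f(s_1,\dots,s_n)$ is straight if the $s_i$ are pairwise distinct variables except for at most one straight argument. A constraint $\pi=\bigwedge_i t_i\neq s_i$ is a finite conjunction of disequations ($t_i,s_i$ variable-disjoint, $s_i$ straight); $\pi\sigma=\bigwedge_i t_i\sigma\neq s_i$; a solution is a grounding substitution $\delta$ with no $t_i\delta$ an instance of $s_i$. A constrained clause is $(C;\pi)$; its ground instances are $C\delta$ for solutions $\delta$ of $\pi$ grounding all variables of $C$ and the $t_i$; a Herbrand interpretation $I$ (set of ground atoms) satisfies a ground clause $\Gamma\rightarrow\Delta$ if $\Delta\cap I\neq\emptyset$ or $\Gamma\not\subseteq I$, satisfies $(C;\pi)$ if it satisfies all its ground instances; a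 set is satisfiable if it has such a model. Clauses in a set are assumed pairwise variable-disjoint. Fix a monadic predicate $T$ fresh to $N$ and, for each non-monadic predicate $P$, a function symbol $f_P$ fresh to $N$. $\mathrm{Proj}_P^T$ maps an atom $P(t_1,\dots,t_n)$ to $T(f_P(t_1,\dots,t_n))$ and leaves atoms with other predicates unchanged; it is extended to (constrained) clauses and clause sets. The transformation rules are: Monadic (MO): $N\Rightarrow\mathrm{Proj}_P^T(N)$, provided $P$ is a non-monadic predicate in the signature of $N$. Shallow (SH): $N\,\dot\cup\,\{(\Gamma\rightarrow E[s]_p,\Delta;\pi)\}\Rightarrow N\cup\{(S(x),\Gamma_l\rightarrow E[p/x],\Delta_l;\pi),\ (\Gamma_r\rightarrow S(s),\Delta_r;\pi)\}$, provided $s$ is complex, $|p|=2$, $x$ is a fresh variable and $S$ a fresh monadic predicate, $\Gamma_l\{x\mapsto s\}\cup\Gamma_r=\Gamma$, $\Delta_l\cup\Delta_r=\Delta$, $\{Q(y)\in\Gamma\mid y\in\mathrm{vars}(E[p/x],\Delta_l)\}\subseteq\Gamma_l$ and $\{Q(y)\in\Gamma\mid y\in\mathrm{vars}(s,\Delta_r)\}\subseteq\Gamma_r$. Linear 1 (LI): $N\,\dot\cup\,\{(\Gamma\rightarrow\Delta,E'[x]_p,E[x]_q;\pi)\}\Rightarrow N\cup\{(\Gamma\sigma,\Gamma\rightarrow\Delta,E'[x]_p,E[q/x'];\pi\wedge\pi\sigma)\}$, with $x'$ fresh and $\sigma=\{x\mapsto x'\}$. Linear 2 (LI): $N\,\dot\cup\,\{(\Gamma\rightarrow\Delta,E[x]_{p,q};\pi)\}\Rightarrow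 N\cup\{(\Gamma\sigma,\Gamma\rightarrow\Delta,E[q/x'];\pi\wedge\pi\sigma)\}$, with $x'$ fresh, $p\neq q$, $\sigma=\{x\mapsto x'\}$. Refinement (Ref): $N\,\dot\cup\,\{(C;\pi)\}\Rightarrow N\cup\{(C;\pi\wedge x\neq t),(C;\pi)\{x\mapsto t\}\}$, provided $x\in\mathrm{vars}(C)$, $t$ is straight and $\mathrm{vars}(t)\cap\mathrm{vars}((C;\pi))=\emptyset$. $\Rightarrow_{\mathrm{AP}}$ is the priority rewrite system consisting of these rules with priority Ref $>$ MO $>$ SH $>$ LI (a rule is applied only if no higher-priority rule is applicable), where Ref is applied only finitely many times. *)

(* Defs.v *)
From Stdlib Require Import List Arith Permutation.
Import ListNotations.

(* Fixed infinite signature: a function symbol is a pair (name, arity) and the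
   arity of [Fun f ts] is [length ts]; likewise for predicates.  Variables
   are natural numbers. *)
Inductive term : Type :=
| Var (x : nat)
| Fun (f : nat) (ts : list term).

Inductive atom : Type := Atom (P : nat) (ts : list term).

(* A clause  Gamma -> Delta ; multisets are represented by lists
   (order irrelevant, multiplicity relevant). *)
Record clause : Type := Cl { neg : list atom; pos : list atom }.

(* A constraint  /\_i t_i <> s_i  as a list of pairs (t_i, s_i). *)
Definition constr := list (term * term).
Definition cclause := (clause * constr)%type.

Definition cset := cclause -> Prop.

Definition finite_cset (N : cset) : Prop :=
  exists l : list cclause, forall c, N c <-> In c l.

Fixpoint tvars (t : term) : list nat :=
  match t with
  | Var x => [x]
  | Fun _ ts => flat_map tvars ts
  end.

Definition avars (a : atom) : list nat :=
  match a with Atom _ ts => flat_map tvars ts end.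

Definition clvars (C : clause) : list nat :=
  flat_map avars (neg C) ++ flat_map avars (pos C).

Definition ccvars (c : cclause) : list nat :=
  clvars (fst c) ++ flat_map (fun ts => tvars (fst ts) ++ tvars (snd ts)) (snd c).

Fixpoint tfuns (t : term) : list (nat * nat) :=
  match t with
  | Var _ => []
  | Fun f ts => (f, length ts) :: flat_map tfuns ts
  end.

Definition afuns (a : atom) : list (nat * nat) :=
  match a with Atom _ ts => flat_map tfuns ts end.

Definition ccfuns (c : cclause) : list (nat * nat) :=
  flat_map afuns (neg (fst c)) ++ flat_map afuns (pos (fst c))
  ++ flat_map (fun ts => tfuns (fst ts) ++ tfuns (snd ts)) (snd c).

Definition apred (a : atom) : nat * nat :=
  match a with Atom P ts => (P, length ts) end.

Definition ccpreds (c : cclause) : list (nat * nat) :=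
  map apred (neg (fst c)) ++ map apred (pos (fst c)).

Definition pred_occurs (N : cset) (Pn : nat * nat) : Prop :=
  exists c, N c /\ In Pn (ccpreds c).

Definition fun_occurs (N : cset) (fn : nat * nat) : Prop :=
  exists c, N c /\ In fn (ccfuns c).

Definition subst := nat -> term.

Fixpoint tsubst (s : subst) (t : term) : term :=
  match t with
  | Var x => s x
  | Fun f ts => Fun f (map (tsubst s) ts)
  end.

Definition asubst (s : subst) (a : atom) : atom :=
  match a with Atom P ts => Atom P (map (tsubst s) ts) end.

Definition clsubst (s : subst) (C : clause) : clause :=
  Cl (map (asubst s) (neg C)) (map (asubst s) (pos C)).

Definition constr_subst (s : subst) (pi : constr) : constr :=
  map (fun ts => (tsubst s (fst ts), snd ts)) pi.

Definition ccsubst (s : subst) (c : cclause) : cclause :=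
  (clsubst s (fst c), constr_subst s (snd c)).

Definition upd (x : nat) (t : term) : subst :=
  fun y => if Nat.eqb y x then t else Var y.

Definition ground (t : term) : Prop := tvars t = [].

Definition is_var (t : term) : Prop := exists x, t = Var x.

Inductive straight : term -> Prop :=
| straight_var x : straight (Var x)
| straight_fun_vars f xs :
    NoDup xs -> straight (Fun f (map Var xs))
| straight_fun_one f xs1 u xs2 :
    NoDup (xs1 ++ xs2) -> straight u -> ~ is_var u ->
    straight (Fun f (map Var xs1 ++ u :: map Var xs2)).

Definition disjoint (l1 l2 : list nat) : Prop :=
  forall y, In y l1 -> ~ In y l2.

Definition wf_constr (pi : constr) : Prop :=
  forall t s, In (t, s) pi -> disjoint (tvars t) (tvars s) /\ straight s.

Definition is_instance (s u : term) : Prop := exists tau, tsubst tau s = u.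

Definition grounding (d : subst) : Prop := forall y, ground (d y).

Definition solution (d : subst) (pi : constr) : Prop :=
  grounding d /\ forall t s, In (t, s) pi -> ~ is_instance s (tsubst d t).

(* Herbrand interpretation = set of (ground) atoms *)
Definition interp := atom -> Prop.

Definition sat_clause (I : interp) (C : clause) : Prop :=
  (exists a, In a (pos C) /\ I a) \/ ~ (forall a, In a (neg C) -> I a).

Definition models_cc (I : interp) (c : cclause) : Prop :=
  forall d, solution d (snd c) -> sat_clause I (clsubst d (fst c)).

Definition satisfiable (N : cset) : Prop :=
  exists I : interp, forall c, N c -> models_cc I c.

Fixpoint term_at (t : term) (p : list nat) : option term :=
  match p with
  | [] => Some t
  | i :: q =>
      match t with
      | Var _ => None
      | Fun _ ts =>
          match nth_error ts i with
          | Some u => term_at u q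
          | None => None
          end
      end
  end.

Fixpoint map_nth {A} (g : A -> A) (i : nat) (l : list A) : list A :=
  match l, i with
  | [], _ => []
  | a :: l', 0 => g a :: l'
  | a :: l', S j => a :: map_nth g j l'
  end.

Fixpoint term_replace (t : term) (p : list nat) (s : term) : term :=
  match p with
  | [] => s
  | i :: q =>
      match t with
      | Var _ => t
      | Fun f ts => Fun f (map_nth (fun u => term_replace u q s) i ts)
      end
  end.

(* positions in atoms: first index selects the argument *)
Definition atom_at (a : atom) (p : list nat) : option term :=
  match a, p with
  | Atom _ ts, i :: q =>
      match nth_error ts i with Some u => term_at u q | None => None end
  | _, [] => None
  end.

Definition atom_replace (a : atom) (p : list nat) (s : term) : atom :=
  match a, p with
  | Atom P ts, i :: q => Atom P (map_nth (fun u => term_replace u q s) i ts)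
  | _, [] => a
  end.

(* ---------- Multiset union (max of multiplicities) ---------- *)
Definition munion {A} (l r m : list A) : Prop :=
  exists X Y Z, Permutation l (X ++ Y) /\ Permutation r (Y ++ Z) /\
    Permutation m (X ++ Y ++ Z) /\ (forall a, In a X -> ~ In a Z).

Definition replace_cl (N : cset) (c : cclause) (news : list cclause) (N' : cset)
  : Prop := N c /\ forall d, N' d <-> ((N d /\ d <> c) \/ In d news).

Definition proj_atom (T P n fP : nat) (a : atom) : atom :=
  match a with
  | Atom Q ts =>
      if andb (Nat.eqb Q P) (Nat.eqb (length ts) n)
      then Atom T [Fun fP ts] else a
  end.

Definition proj_cc (T P n fP : nat) (c : cclause) : cclause :=
  (Cl (map (proj_atom T P n fP) (neg (fst c)))
      (map (proj_atom T P n fP) (pos (fst c))), snd c).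

(* (MO) ; fP P n is the name of f_P for the predicate (P,n) *)
Definition mo_step (T : nat) (fP : nat -> nat -> nat) (N N' : cset) : Prop :=
  exists P n, n <> 1 /\ pred_occurs N (P, n) /\
    forall d, N' d <-> exists c, N c /\ d = proj_cc T P n (fP P n) c.

Definition sh_step (N N' : cset) : Prop :=
  exists (G Dfull D Gl Gr Dl Dr : list atom) (E : atom) (p : list nat)
         (s : term) (x S : nat) (pi : constr),
    let c := (Cl G Dfull, pi) in
    Permutation Dfull (E :: D) /\
    atom_at E p = Some s /\ length p = 2 /\ ~ is_var s /\
    ~ In x (ccvars c) /\ ~ pred_occurs N (S, 1) /\
    munion (map (asubst (upd x s)) Gl) Gr G /\
    munion Dl Dr D /\
    (forall Q y, In (Atom Q [Var y]) G ->
       In y (avars (atom_replace E p (Var x)) ++ flat_map avars Dl) ->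
       In (Atom Q [Var y]) Gl) /\
    (forall Q y, In (Atom Q [Var y]) G ->
       In y (tvars s ++ flat_map avars Dr) ->
       In (Atom Q [Var y]) Gr) /\
    replace_cl N c
      [ (Cl (Atom S [Var x] :: Gl) (atom_replace E p (Var x) :: Dl), pi);
        (Cl Gr (Atom S [s] :: Dr), pi) ] N'.

Definition li_step (N N' : cset) : Prop :=
  (exists (G Dfull D : list atom) (E' E : atom) (p q : list nat) (x x' : nat)
          (pi : constr),
     let c := (Cl G Dfull, pi) in
     let sg := upd x (Var x') in
     Permutation Dfull (E' :: E :: D) /\
     atom_at E' p = Some (Var x) /\ atom_at E q = Some (Var x) /\
     ~ In x' (ccvars c) /\
     replace_cl N c
       [ (Cl (map (asubst sg) G ++ G) (E' :: atom_replace E q (Var x') :: D),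
          pi ++ constr_subst sg pi) ] N')
  \/
  (exists (G Dfull D : list atom) (E : atom) (p q : list nat) (x x' : nat)
          (pi : constr),
     let c := (Cl G Dfull, pi) in
     let sg := upd x (Var x') in
     Permutation Dfull (E :: D) /\
     atom_at E p = Some (Var x) /\ atom_at E q = Some (Var x) /\ p <> q /\
     ~ In x' (ccvars c) /\
     replace_cl N c
       [ (Cl (map (asubst sg) G ++ G) (atom_replace E q (Var x') :: D),
          pi ++ constr_subst sg pi) ] N').

Definition ref_step (N N' : cset) : Prop :=
  exists (C : clause) (pi : constr) (x : nat) (t : term),
    In x (clvars C) /\ straight t /\ disjoint (tvars t) (ccvars (C, pi)) /\
    replace_cl N (C, pi)
      [ (C, pi ++ [(Var x, t)]); ccsubst (upd x t) (C, pi) ] N'.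

Inductive rule_kind : Type := KRef | KMO | KSH | KLI.

Definition ap_step (T : nat) (fP : nat -> nat -> nat) (k : rule_kind)
  (N N' : cset) : Prop :=
  match k with
  | KRef => ref_step N N'
  | KMO => mo_step T fP N N'
  | KSH => sh_step N N' /\ ~ (exists M, mo_step T fP N M)
  | KLI => li_step N N' /\ ~ (exists M, mo_step T fP N M)
                        /\ ~ (exists M, sh_step N M)
  end.

Definition fresh_params (N : cset) (T : nat) (fP : nat -> nat -> nat) : Prop :=
  ~ pred_occurs N (T, 1) /\
  (forall P n, n <> 1 -> ~ fun_occurs N (fP P n, n)) /\
  (forall P Q n, n <> 1 -> fP P n = fP Q n -> P = Q).

(* Main.v *)
Require Import Defs.
From Stdlib Require Import List Arith Permutation Lia Classical.
Import ListNotations.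

Definition term_ind' (P : term -> Prop) (Hv : forall x, P (Var x))
  (Hf : forall f ts, Forall P ts -> P (Fun f ts)) : forall t, P t :=
  fix F t := match t with
  | Var x => Hv x
  | Fun f ts => Hf f ts ((fix G l := match l return Forall P l with
       | [] => Forall_nil _ | u :: l' => Forall_cons _ (F u) (G l') end) ts)
  end.

Lemma tsubst_ext : forall t s1 s2, (forall y, In y (tvars t) -> s1 y = s2 y) ->
  tsubst s1 t = tsubst s2 t.
Proof.
  induction t using term_ind'; intros s1 s2 Hs; simpl in *.
  - apply Hs; auto.
  - f_equal. apply map_ext_in. intros u Hu. rewrite Forall_forall in H.
    apply H; auto. intros y Hy. apply Hs. apply in_flat_map. eauto.
Qed.

Lemma tsubst_comp : forall t s1 s2,
  tsubst s2 (tsubst s1 t) = tsubst (fun y => tsubst s2 (s1 y)) t.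
Proof.
  induction t using term_ind'; intros s1 s2; simpl; auto.
  f_equal. rewrite map_map. apply map_ext_in. intros u Hu.
  rewrite Forall_forall in H. apply H; auto.
Qed.

Lemma tvars_subst_inv : forall t s z, In z (tvars (tsubst s t)) ->
  exists y, In y (tvars t) /\ In z (tvars (s y)).
Proof.
  induction t using term_ind'; intros s z Hz; simpl in *.
  - exists x; auto.
  - apply in_flat_map in Hz. destruct Hz as [u [Hu Hz]].
    apply in_map_iff in Hu. destruct Hu as [v [<- Hv]].
    rewrite Forall_forall in H. destruct (H v Hv s z Hz) as [y [Hy1 Hy2]].
    exists y. split; auto. apply in_flat_map. eauto.
Qed.

Lemma tvars_subst_in : forall t s y z, In y (tvars t) -> In z (tvars (s y)) ->
  In z (tvars (tsubst s t)).
Proof.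
  induction t using term_ind'; intros s y z Hy Hz; simpl in *.
  - destruct Hy as [<-|[]]; auto.
  - apply in_flat_map in Hy. destruct Hy as [u [Hu Hy]].
    apply in_flat_map. exists (tsubst s u). split. apply in_map; auto.
    rewrite Forall_forall in H. eapply H; eauto.
Qed.

Lemma ground_subst : forall d t, grounding d -> ground (tsubst d t).
Proof.
  intros d t Hd. unfold ground.
  destruct (tvars (tsubst d t)) eqn:E; auto.
  exfalso. destruct (tvars_subst_inv t d n) as [y [_ Hy]]. rewrite E; left; auto.
  rewrite (Hd y) in Hy. destruct Hy.
Qed.

Lemma asubst_ext : forall a s1 s2, (forall y, In y (avars a) -> s1 y = s2 y) ->
  asubst s1 a = asubst s2 a.
Proof.
  intros [P ts] s1 s2 H; simpl in *. f_equal. apply map_ext_in. intros u Hu.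
  apply tsubst_ext. intros y Hy. apply H. apply in_flat_map; eauto.
Qed.

Lemma asubst_comp : forall a s1 s2,
  asubst s2 (asubst s1 a) = asubst (fun y => tsubst s2 (s1 y)) a.
Proof.
  intros [P ts] s1 s2; simpl. f_equal. rewrite map_map. apply map_ext.
  intros; apply tsubst_comp.
Qed.

Lemma nth_error_split {A} : forall (l : list A) i u,
  nth_error l i = Some u -> exists l1 l2, l = l1 ++ u :: l2 /\ length l1 = i.
Proof.
  induction l; intros i u H; destruct i; simpl in *; try discriminate.
  - inversion H; subst. exists [], l; auto.
  - destruct (IHl i u H) as [l1 [l2 [-> E]]]. exists (a :: l1), l2.
    simpl; auto.
Qed.

Lemma map_nth_app {A} (g : A -> A) : forall l1 u l2,
  Defs.map_nth g (length l1) (l1 ++ u :: l2) = l1 ++ g u :: l2.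
Proof. induction l1; intros; simpl; auto. rewrite IHl1; auto. Qed.

Lemma nth_error_map_nth {A} (g : A -> A) : forall l i j,
  nth_error (Defs.map_nth g j l) i =
  if Nat.eqb i j then option_map g (nth_error l i) else nth_error l i.
Proof.
  induction l as [|a l IHl]; intros i j; destruct i, j; simpl; auto.
  all: try (destruct i; reflexivity).
  destruct (i =? j); reflexivity.
Qed.

Lemma map_nth_length {A} (g : A -> A) : forall l i, length (Defs.map_nth g i l) = length l.
Proof. induction l; intros i; destruct i; simpl; auto. Qed.

Fixpoint tsize (t : term) : nat :=
  match t with Var _ => 0 | Fun _ ts => S (list_sum (map tsize ts)) end.

Definition asize (a : atom) : nat := match a with Atom _ ts => list_sum (map tsize ts) end.

Lemma term_replace_nil : forall u r, term_replace u [] r = r.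
Proof. destruct u; reflexivity. Qed.

Lemma term_at_inv : forall j q u s, term_at u (j :: q) = Some s ->
  exists f l1 u' l2, u = Fun f (l1 ++ u' :: l2) /\ length l1 = j /\ term_at u' q = Some s.
Proof.
  intros j q u s H. simpl in H. destruct u as [x|f us]; try discriminate.
  destruct (nth_error us j) as [u'|] eqn:E; try discriminate.
  destruct (nth_error_split us j u' E) as [l1 [l2 [-> <-]]].
  exists f, l1, u', l2; auto.
Qed.

Lemma term_at_vars : forall q u s, term_at u q = Some s ->
  exists A B, tvars u = A ++ tvars s ++ B /\
    forall r, tvars (term_replace u q r) = A ++ tvars r ++ B.
Proof.
  induction q as [|j q IH]; intros u s H.
  - simpl in H. inversion H; subst. exists [], []. simpl. split; [rewrite app_nil_r; auto|intros; rewrite term_replace_nil, app_nil_r; reflexivity].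
  - destruct (term_at_inv _ _ _ _ H) as [f [l1 [u' [l2 [-> [<- H']]]]]].
    destruct (IH _ _ H') as [A [B [H1 H2]]].
    exists (flat_map tvars l1 ++ A), (B ++ flat_map tvars l2). split.
    + simpl. rewrite flat_map_app. simpl. rewrite H1. rewrite !app_assoc. auto.
    + intros r. cbn [term_replace]. rewrite map_nth_app. simpl.
      rewrite flat_map_app. simpl. rewrite H2. rewrite !app_assoc. auto.
Qed.

Lemma term_at_size : forall q u s r, term_at u q = Some s ->
  tsize u + tsize r = tsize (term_replace u q r) + tsize s.
Proof.
  induction q as [|j q IH]; intros u s r H.
  - simpl in H. inversion H; subst. rewrite term_replace_nil. lia.
  - destruct (term_at_inv _ _ _ _ H) as [f [l1 [u' [l2 [-> [<- H']]]]]].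
    cbn [term_replace]. rewrite map_nth_app. simpl.
    rewrite !map_app, !list_sum_app. simpl. specialize (IH _ _ r H'). lia.
Qed.

Lemma term_at_subst : forall q u s r sg, term_at u q = Some s ->
  tsubst sg r = tsubst sg s -> tsubst sg (term_replace u q r) = tsubst sg u.
Proof.
  induction q as [|j q IH]; intros u s r sg H Hr.
  - simpl in H. inversion H; subst. rewrite term_replace_nil. auto.
  - destruct (term_at_inv _ _ _ _ H) as [f [l1 [u' [l2 [-> [<- H']]]]]].
    cbn [term_replace]. rewrite map_nth_app. simpl.
    rewrite !map_app. simpl. rewrite (IH _ _ _ _ H' Hr). auto.
Qed.

Lemma term_at_other : forall p u q x y r, term_at u p = Some (Var x) ->
  term_at u q = Some (Var y) -> p <> q ->
  term_at (term_replace u q r) p = Some (Var x).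
Proof.
  induction p as [|i p IH]; intros u q x y r Hp Hq Hpq.
  - simpl in Hp. inversion Hp; subst. destruct q; [congruence|]. simpl in Hq. discriminate.
  - destruct q as [|j q].
    + simpl in Hq. inversion Hq; subst. simpl in Hp. discriminate.
    + simpl in Hp, Hq |- *. destruct u as [z|f us]; try discriminate.
      cbn [term_replace]; rewrite nth_error_map_nth. destruct (Nat.eqb i j) eqn:Eij.
      * apply Nat.eqb_eq in Eij; subst.
        destruct (nth_error us j) as [u'|]; try discriminate. simpl.
        eapply IH; eauto. congruence.
      * auto.
Qed.

Lemma atom_at_inv : forall E p s, atom_at E p = Some s ->
  exists P l1 u l2 q, E = Atom P (l1 ++ u :: l2) /\ p = length l1 :: q /\
    term_at u q = Some s /\
    forall r, atom_replace E p r = Atom P (l1 ++ term_replace u q r :: l2).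
Proof.
  intros [P ts] p s H. destruct p as [|i q]; simpl in H; try discriminate.
  destruct (nth_error ts i) as [u|] eqn:E; try discriminate.
  destruct (nth_error_split ts i u E) as [l1 [l2 [-> <-]]].
  exists P, l1, u, l2, q. repeat split; auto.
  intros r. simpl. rewrite map_nth_app. auto.
Qed.

Lemma atom_at_vars : forall E p s, atom_at E p = Some s ->
  exists A B, avars E = A ++ tvars s ++ B /\
    forall r, avars (atom_replace E p r) = A ++ tvars r ++ B.
Proof.
  intros E p s H. destruct (atom_at_inv _ _ _ H) as [P [l1 [u [l2 [q [-> [-> [H1 H2]]]]]]]].
  destruct (term_at_vars _ _ _ H1) as [A [B [H3 H4]]].
  exists (flat_map tvars l1 ++ A), (B ++ flat_map tvars l2). split.
  - simpl. rewrite flat_map_app. simpl. rewrite H3, !app_assoc. auto.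
  - intros r. rewrite H2. simpl. rewrite flat_map_app. simpl. rewrite H4, !app_assoc. auto.
Qed.

Lemma atom_at_size : forall E p s r, atom_at E p = Some s ->
  asize E + tsize r = asize (atom_replace E p r) + tsize s.
Proof.
  intros E p s r H. destruct (atom_at_inv _ _ _ H) as [P [l1 [u [l2 [q [-> [-> [H1 H2]]]]]]]].
  rewrite H2. simpl. rewrite !map_app, !list_sum_app. simpl.
  pose proof (term_at_size _ _ _ r H1). lia.
Qed.

Lemma atom_at_subst : forall E p s r sg, atom_at E p = Some s ->
  tsubst sg r = tsubst sg s -> asubst sg (atom_replace E p r) = asubst sg E.
Proof.
  intros E p s r sg H Hr. destruct (atom_at_inv _ _ _ H) as [P [l1 [u [l2 [q [-> [-> [H1 H2]]]]]]]].
  rewrite H2. simpl. rewrite !map_app. simpl. rewrite (term_at_subst _ _ _ _ _ H1 Hr). auto.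
Qed.

Lemma atom_replace_pred : forall E p r, apred (atom_replace E p r) = apred E.
Proof.
  intros [P ts] [|i q] r; simpl; auto. rewrite map_nth_length. auto.
Qed.

Lemma atom_at_other : forall E p q x y r, atom_at E p = Some (Var x) ->
  atom_at E q = Some (Var y) -> p <> q ->
  atom_at (atom_replace E q r) p = Some (Var x).
Proof.
  intros [P ts] [|i p] [|j q] x y r Hp Hq Hpq; simpl in *; try discriminate.
  rewrite nth_error_map_nth. destruct (Nat.eqb i j) eqn:Eij.
  - apply Nat.eqb_eq in Eij; subst.
    destruct (nth_error ts j) as [u'|]; try discriminate. simpl.
    eapply term_at_other; eauto. congruence.
  - auto.
Qed.

Lemma list_sum_in : forall (f : term -> nat) l a, In a l -> f a <= list_sum (map f l).
Proof.
  induction l; intros b H; simpl in *; [destruct H|]. destruct H as [<-|H]; [lia|].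
  specialize (IHl b H). lia.
Qed.

Lemma atom_at_depth2 : forall E p s, atom_at E p = Some s -> length p = 2 ->
  tsize s + 1 <= asize E.
Proof.
  intros E p s H Hl. destruct (atom_at_inv _ _ _ H) as [P [l1 [u [l2 [q [-> [-> [H1 H2]]]]]]]].
  simpl in Hl. destruct q as [|j [|k q]]; simpl in Hl; try lia.
  destruct (term_at_inv _ _ _ _ H1) as [f [m1 [u' [m2 [-> [_ H3]]]]]].
  simpl in H3. inversion H3; subst.
  simpl. rewrite !map_app, !list_sum_app. simpl. rewrite !map_app, !list_sum_app. simpl. lia.
Qed.

Lemma atom_at_in : forall E p s y, atom_at E p = Some s -> In y (tvars s) -> In y (avars E).
Proof.
  intros E p s y H Hy. destruct (atom_at_vars _ _ _ H) as [A [B [H1 _]]].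
  rewrite H1. apply in_or_app. right. apply in_or_app. auto.
Qed.

Lemma sat_mono2 : forall I I' C C',
  (forall b, In b (pos C') -> I' b -> exists a, In a (pos C) /\ I a) ->
  (forall b, In b (neg C') -> (forall a, In a (neg C) -> I a) -> I' b) ->
  sat_clause I' C' -> sat_clause I C.
Proof.
  intros I I' C C' Hp Hn [[b [Hb Ib]]|H].
  - left. eauto.
  - right. intros Hall. apply H. intros b Hb. eauto.
Qed.

Lemma sat_mono : forall I C C',
  (forall b, In b (pos C') -> I b -> exists a, In a (pos C) /\ I a) ->
  (forall b, In b (neg C') -> (forall a, In a (neg C) -> I a) -> I b) ->
  sat_clause I C' -> sat_clause I C.
Proof.
  intros I C C' Hp Hn [[b [Hb Ib]]|H].
  - left. eauto.
  - right. intros Hall. apply H. intros b Hb. eauto.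
Qed.

Lemma sound_replace : forall N c news N', replace_cl N c news N' ->
  (forall I, (forall d, In d news -> models_cc I d) -> models_cc I c) ->
  satisfiable N' -> satisfiable N.
Proof.
  intros N c news N' [Hc HN'] Hs [I HI]. exists I. intros c0 Hc0.
  destruct (classic (c0 = c)) as [->|Hne].
  - apply Hs. intros d Hd. apply HI. apply HN'. auto.
  - apply HI. apply HN'. auto.
Qed.

Lemma ccv_neg : forall C pi a y, In a (neg C) -> In y (avars a) -> In y (ccvars (C, pi)).
Proof.
  intros. unfold ccvars, clvars. simpl. apply in_or_app; left. apply in_or_app; left.
  apply in_flat_map; eauto.
Qed.
Lemma ccv_pos : forall C pi a y, In a (pos C) -> In y (avars a) -> In y (ccvars (C, pi)).
Proof.
  intros. unfold ccvars, clvars. simpl. apply in_or_app; left. apply in_or_app; right.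
  apply in_flat_map; eauto.
Qed.
Lemma ccv_pi : forall C pi t0 s0 y, In (t0, s0) pi -> In y (tvars t0) -> In y (ccvars (C, pi)).
Proof.
  intros. unfold ccvars. simpl. apply in_or_app; right.
  apply in_flat_map. exists (t0, s0). simpl. split; auto. apply in_or_app; auto.
Qed.

Lemma munion_sub {A} : forall (l r m : list A), munion l r m ->
  (exists K, Permutation m (l ++ K)) /\ (exists K, Permutation m (r ++ K)).
Proof.
  intros l r m [X [Y [Z [H1 [H2 [H3 _]]]]]]. split.
  - exists Z. rewrite H3, H1, app_assoc. auto.
  - exists X. rewrite H3, H2. apply Permutation_app_comm.
Qed.

Lemma munion_incl {A} : forall (l r m : list A), munion l r m ->
  (forall a, In a l -> In a m) /\ (forall a, In a r -> In a m).
Proof.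
  intros l r m H. destruct (munion_sub _ _ _ H) as [[K1 H1] [K2 H2]]. split; intros a Ha.
  - apply Permutation_sym in H1. eapply Permutation_in; eauto. apply in_or_app; auto.
  - apply Permutation_sym in H2. eapply Permutation_in; eauto. apply in_or_app; auto.
Qed.

Lemma perm_in {A} : forall (l m : list A) a, Permutation l m -> In a m -> In a l.
Proof. intros. apply Permutation_sym in H. eapply Permutation_in; eauto. Qed.

Lemma tsubst_agree : forall t s1 s2 s3,
  (forall y, In y (tvars t) -> tsubst s2 (s1 y) = s3 y) ->
  tsubst s2 (tsubst s1 t) = tsubst s3 t.
Proof. intros. rewrite tsubst_comp. apply tsubst_ext. auto. Qed.

Lemma asubst_agree : forall a s1 s2 s3,
  (forall y, In y (avars a) -> tsubst s2 (s1 y) = s3 y) ->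
  asubst s2 (asubst s1 a) = asubst s3 a.
Proof. intros. rewrite asubst_comp. apply asubst_ext. auto. Qed.

Lemma ref_sound : forall N N', ref_step N N' -> satisfiable N' -> satisfiable N.
Proof.
  intros N N' [C [pi [x [t [Hx [Hst [Hdis Hrep]]]]]]].
  eapply sound_replace; eauto. intros I HI d [Hg Hs]. simpl in Hs.
  destruct (classic (is_instance t (d x))) as [[tau Htau]|Hni].
  - set (d' := fun y => if in_dec Nat.eq_dec y (tvars t) then tau y else d y).
    assert (Hag : forall y, In y (ccvars (C, pi)) -> tsubst d' (upd x t y) = d y).
    { intros y Hy. unfold upd. destruct (Nat.eqb y x) eqn:E.
      - apply Nat.eqb_eq in E; subst. rewrite <- Htau. apply tsubst_ext.
        intros z Hz. unfold d'. destruct (in_dec Nat.eq_dec z (tvars t)); tauto.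
      - simpl. unfold d'. destruct (in_dec Nat.eq_dec y (tvars t)); auto.
        exfalso. eapply Hdis; eauto. }
    assert (Hsol : solution d' (constr_subst (upd x t) pi)).
    { split.
      - intros y. unfold d'. destruct (in_dec Nat.eq_dec y (tvars t)) as [Hy|]; [|apply Hg].
        unfold ground. destruct (tvars (tau y)) as [|z l] eqn:E; auto. exfalso.
        assert (In z (tvars (tsubst tau t))) by (eapply tvars_subst_in; eauto; rewrite E; left; auto).
        rewrite Htau, (Hg x) in H. destruct H.
      - intros t0 s0 Hin. unfold constr_subst in Hin. apply in_map_iff in Hin.
        destruct Hin as [[t1 s1] [Heq Hin]]. simpl in Heq. inversion Heq; subst.
        rewrite tsubst_agree with (s3 := d). apply (Hs _ _ Hin).
        intros y Hy. apply Hag. eapply ccv_pi; eauto. }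
    specialize (HI _ (or_intror (or_introl eq_refl)) d' Hsol). simpl in HI.
    revert HI. apply sat_mono; simpl; intros b Hb.
    + intros Ib. apply in_map_iff in Hb. destruct Hb as [b' [<- Hb]].
      apply in_map_iff in Hb. destruct Hb as [a [<- Ha]].
      exists (asubst d a). split; [apply in_map; auto|].
      rewrite asubst_agree with (s3 := d) in Ib; auto.
      intros y Hy. apply Hag. eapply ccv_pos; eauto.
    + intros Hall. apply in_map_iff in Hb. destruct Hb as [b' [<- Hb]].
      apply in_map_iff in Hb. destruct Hb as [a [<- Ha]].
      rewrite asubst_agree with (s3 := d). apply Hall. apply in_map; auto.
      intros y Hy. apply Hag. eapply ccv_neg; eauto.
  - apply (HI _ (or_introl eq_refl)). split; auto. simpl.
    intros t0 s0 Hin. apply in_app_or in Hin. destruct Hin as [Hin|[Heq|[]]]; auto.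
    inversion Heq; subst. simpl. auto.
Qed.

Lemma proj_subst : forall T P n f d a,
  asubst d (proj_atom T P n f a) = proj_atom T P n f (asubst d a).
Proof.
  intros T P n f d [Q ts]. simpl. rewrite length_map.
  destruct (andb (Nat.eqb Q P) (Nat.eqb (length ts) n)); simpl; auto.
Qed.

Lemma mo_sound : forall T fP N N', mo_step T fP N N' -> satisfiable N' -> satisfiable N.
Proof.
  intros T fP N N' [P [n [_ [_ HN']]]] [I' HI'].
  exists (fun a => I' (proj_atom T P n (fP P n) a)). intros c Hc d Hd.
  assert (H := HI' (proj_cc T P n (fP P n) c) (proj2 (HN' _) (ex_intro _ c (conj Hc eq_refl))) d Hd).
  revert H. apply sat_mono2; simpl; intros b Hb.
  - intros Ib. apply in_map_iff in Hb. destruct Hb as [b' [<- Hb]].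
    apply in_map_iff in Hb. destruct Hb as [a [<- Ha]].
    exists (asubst d a). split; [apply in_map; auto|]. rewrite <- proj_subst. auto.
  - intros Hall. apply in_map_iff in Hb. destruct Hb as [b' [<- Hb]].
    apply in_map_iff in Hb. destruct Hb as [a [<- Ha]].
    rewrite proj_subst. apply (Hall (asubst d a)). apply in_map; auto.
Qed.

Lemma sh_sound : forall N N', sh_step N N' -> satisfiable N' -> satisfiable N.
Proof.
  intros N N' [G [Dfull [D [Gl [Gr [Dl [Dr [E [p [s [x [S [pi H]]]]]]]]]]]]].
  cbv zeta in H.
  destruct H as [HD [Hp [Hlp [Hnv [Hx [_ [HmG [HmD [_ [_ Hrep]]]]]]]]]].
  destruct (munion_incl _ _ _ HmG) as [HGl HGr].
  destruct (munion_incl _ _ _ HmD) as [HDl HDr].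
  assert (HinD : forall a, In a D -> In a Dfull).
  { intros a Ha. eapply perm_in; eauto. right; auto. }
  assert (HinE : In E Dfull) by (eapply perm_in; eauto; left; auto).
  eapply sound_replace; eauto. intros I HI d [Hg Hs]. simpl in Hs |- *.
  destruct (classic (forall a, In a (map (asubst d) G) -> I a)) as [HG|HG]; [|right; auto].
  assert (H2 := HI _ (or_intror (or_introl eq_refl)) d (conj Hg Hs)). simpl in H2.
  destruct H2 as [[b [Hb IS]]|H2].
  2:{ exfalso. apply H2. intros a Ha. apply in_map_iff in Ha. destruct Ha as [a' [<- Ha]].
      apply HG. apply in_map. auto. }
  destruct Hb as [<-|Hb].
  2:{ apply in_map_iff in Hb. destruct Hb as [a [<- Ha]]. left. exists (asubst d a).
      split; auto. apply in_map; auto. }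

  set (d' := fun y => if Nat.eqb y x then tsubst d s else d y).
  assert (Hag : forall y, In y (ccvars (Cl G Dfull, pi)) -> d' y = d y).
  { intros y Hy. unfold d'. destruct (Nat.eqb y x) eqn:E'; auto.
    apply Nat.eqb_eq in E'; subst. contradiction. }
  assert (Hsol : solution d' pi).
  { split.
    - intros y. unfold d'. destruct (Nat.eqb y x); [apply ground_subst; auto|apply Hg].
    - intros t0 s0 Hin. rewrite (tsubst_ext t0 d' d). apply (Hs _ _ Hin).
      intros y Hy. apply Hag. eapply ccv_pi; eauto. }
  assert (H1 := HI _ (or_introl eq_refl) d' Hsol). simpl in H1.
  destruct H1 as [[b [Hb Ib]]|H1].
  - left. destruct Hb as [<-|Hb].
    + exists (asubst d E). split; [apply in_map; auto|].
      rewrite (atom_at_subst E p s (Var x) d' Hp) in Ib.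
      * rewrite (asubst_ext E d' d) in Ib; auto. intros y Hy. apply Hag. eapply ccv_pos; eauto.
      * simpl. unfold d' at 1. rewrite Nat.eqb_refl. symmetry. apply tsubst_ext.
        intros y Hy. apply Hag. eapply ccv_pos; eauto. eapply atom_at_in; eauto.
    + apply in_map_iff in Hb. destruct Hb as [a [<- Ha]]. exists (asubst d a).
      split; [apply in_map; auto|]. rewrite (asubst_ext a d' d) in Ib; auto.
      intros y Hy. apply Hag. eapply ccv_pos with (a := a); [simpl; apply HinD, HDl; auto|auto].
  - exfalso. apply H1. intros a [<-|Ha].
    + simpl. unfold d' at 1. rewrite Nat.eqb_refl. auto.
    + apply in_map_iff in Ha. destruct Ha as [g [<- Hgin]].
      rewrite <- (asubst_agree g (upd x s) d d').
      * apply HG. apply in_map. apply HGl. apply in_map. auto.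
      * intros y Hy. unfold upd, d'. destruct (Nat.eqb y x); auto.
Qed.

Lemma li_core : forall I G Dfull P' pi x x',
  ~ In x' (ccvars (Cl G Dfull, pi)) ->
  (forall d : subst, forall b, In b P' -> exists a, In a Dfull /\
     asubst (fun y => if Nat.eqb y x' then d x else d y) b = asubst d a) ->
  models_cc I (Cl (map (asubst (upd x (Var x'))) G ++ G) P',
               pi ++ constr_subst (upd x (Var x')) pi) ->
  models_cc I (Cl G Dfull, pi).
Proof.
  intros I G Dfull P' pi x x' Hx' HP HI d [Hg Hs]. simpl in Hs.
  set (d' := fun y => if Nat.eqb y x' then d x else d y).
  assert (Hag : forall y, In y (ccvars (Cl G Dfull, pi)) -> d' y = d y).
  { intros y Hy. unfold d'. destruct (Nat.eqb y x') eqn:E'; auto.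
    apply Nat.eqb_eq in E'; subst. contradiction. }
  assert (Hag2 : forall y, In y (ccvars (Cl G Dfull, pi)) ->
     tsubst d' (upd x (Var x') y) = d y).
  { intros y Hy. unfold upd. destruct (Nat.eqb y x) eqn:E.
    - apply Nat.eqb_eq in E; subst. simpl. unfold d'. rewrite Nat.eqb_refl. auto.
    - simpl. auto. }
  assert (Hsol : solution d' (pi ++ constr_subst (upd x (Var x')) pi)).
  { split.
    - intros y. unfold d'. destruct (Nat.eqb y x'); apply Hg.
    - intros t0 s0 Hin. apply in_app_or in Hin. destruct Hin as [Hin|Hin].
      + rewrite (tsubst_ext t0 d' d). apply (Hs _ _ Hin).
        intros y Hy. apply Hag. eapply ccv_pi; eauto.
      + unfold constr_subst in Hin. apply in_map_iff in Hin.
        destruct Hin as [[t1 s1] [Heq Hin]]. simpl in Heq. inversion Heq; subst.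
        rewrite tsubst_agree with (s3 := d). apply (Hs _ _ Hin).
        intros y Hy. apply Hag2. eapply ccv_pi; eauto. }
  specialize (HI d' Hsol). simpl in HI. revert HI. apply sat_mono; simpl; intros b Hb.
  - intros Ib. apply in_map_iff in Hb. destruct Hb as [b' [<- Hb]].
    destruct (HP d b' Hb) as [a [Ha Heq]]. exists (asubst d a). split.
    + apply in_map; auto.
    + rewrite <- Heq. auto.
  - intros Hall. apply in_map_iff in Hb. destruct Hb as [b' [<- Hb]].
    apply in_app_or in Hb. destruct Hb as [Hb|Hb].
    + apply in_map_iff in Hb. destruct Hb as [a [<- Ha]].
      rewrite asubst_agree with (s3 := d). apply Hall. apply in_map; auto.
      intros y Hy. apply Hag2. eapply ccv_neg; eauto.
    + rewrite (asubst_ext b' d' d). apply Hall. apply in_map; auto.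
      intros y Hy. apply Hag. eapply ccv_neg; eauto.
Qed.

Lemma li_sound : forall N N', li_step N N' -> satisfiable N' -> satisfiable N.
Proof.
  intros N N' [H|H].
  - destruct H as [G [Dfull [D [E' [E [p [q [x [x' [pi H]]]]]]]]]]. cbv zeta in H.
    destruct H as [HD [Hp [Hq [Hx' Hrep]]]].
    eapply sound_replace; eauto. intros I HI. eapply li_core; eauto.
    2:{ apply HI. left; auto. }
    assert (Hxin : In x (ccvars (Cl G Dfull, pi))).
    { eapply ccv_pos with (a := E'). simpl. eapply perm_in; eauto. left; auto.
      eapply atom_at_in; eauto. simpl; auto. }
    intros d b [<-|[<-|Hb]].
    + exists E'. split. eapply perm_in; eauto. left; auto.
      apply asubst_ext. intros y Hy. destruct (Nat.eqb y x') eqn:E1; auto.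
      apply Nat.eqb_eq in E1; subst. exfalso. apply Hx'.
      eapply ccv_pos with (a := E'); eauto. simpl. eapply perm_in; eauto. left; auto.
    + exists E. split. eapply perm_in; eauto. right; left; auto.
      rewrite (atom_at_subst E q (Var x) (Var x')); auto.
      * apply asubst_ext. intros y Hy. destruct (Nat.eqb y x') eqn:E1; auto.
        apply Nat.eqb_eq in E1; subst. exfalso. apply Hx'.
        eapply ccv_pos with (a := E); eauto. simpl. eapply perm_in; eauto. right; left; auto.
      * simpl. rewrite Nat.eqb_refl. destruct (Nat.eqb x x'); auto.
    + exists b. split. eapply perm_in; eauto. right; right; auto.
      apply asubst_ext. intros y Hy. destruct (Nat.eqb y x') eqn:E1; auto.
      apply Nat.eqb_eq in E1; subst. exfalso. apply Hx'.
      eapply ccv_pos with (a := b); eauto. simpl. eapply perm_in; eauto. right; right; auto.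
  - destruct H as [G [Dfull [D [E [p [q [x [x' [pi H]]]]]]]]]. cbv zeta in H.
    destruct H as [HD [Hp [Hq [Hpq [Hx' Hrep]]]]].
    eapply sound_replace; eauto. intros I HI. eapply li_core; eauto.
    2:{ apply HI. left; auto. }
    assert (Hxin : In x (ccvars (Cl G Dfull, pi))).
    { eapply ccv_pos with (a := E). simpl. eapply perm_in; eauto. left; auto.
      eapply atom_at_in; eauto. simpl; auto. }
    intros d b [<-|Hb].
    + exists E. split. eapply perm_in; eauto. left; auto.
      rewrite (atom_at_subst E q (Var x) (Var x')); auto.
      * apply asubst_ext. intros y Hy. destruct (Nat.eqb y x') eqn:E1; auto.
        apply Nat.eqb_eq in E1; subst. exfalso. apply Hx'.
        eapply ccv_pos with (a := E); eauto. simpl. eapply perm_in; eauto. left; auto.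
      * simpl. rewrite Nat.eqb_refl. destruct (Nat.eqb x x'); auto.
    + exists b. split. eapply perm_in; eauto. right; auto.
      apply asubst_ext. intros y Hy. destruct (Nat.eqb y x') eqn:E1; auto.
      apply Nat.eqb_eq in E1; subst. exfalso. apply Hx'.
      eapply ccv_pos with (a := b); eauto. simpl. eapply perm_in; eauto. right; auto.
Qed.

Lemma part2 : forall T fP k N N', ap_step T fP k N N' -> satisfiable N' -> satisfiable N.
Proof.
  intros T fP k N N' H. destruct k; simpl in H.
  - eapply ref_sound; eauto.
  - eapply mo_sound; eauto.
  - eapply sh_sound; apply H.
  - eapply li_sound; apply H.
Qed.

Fixpoint nl (l : list nat) : nat :=
  match l with
  | [] => 0
  | a :: l' => (if in_dec Nat.eq_dec a l' then 1 else 0) + nl l'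
  end.

Lemma nl_perm : forall l m, Permutation l m -> nl l = nl m.
Proof.
  intros l m H. induction H as [|x l l' H IH|x y l|l l' l'' H1 IH1 H2 IH2].
  - auto.
  - cbn [nl]. rewrite IH.
    destruct (in_dec Nat.eq_dec x l) as [h1|h1], (in_dec Nat.eq_dec x l') as [h2|h2]; auto.
    + exfalso. apply h2. eapply Permutation_in; eauto.
    + exfalso. apply h1. apply Permutation_sym in H. eapply Permutation_in; eauto.
  - cbn [nl].
    destruct (in_dec Nat.eq_dec y (x :: l)) as [h1|h1];
    destruct (in_dec Nat.eq_dec x (y :: l)) as [h2|h2];
    destruct (in_dec Nat.eq_dec x l) as [h3|h3]; destruct (in_dec Nat.eq_dec y l) as [h4|h4];
    simpl in h1, h2; try lia; exfalso; intuition congruence.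
  - congruence.
Qed.

Lemma nl_app_le : forall l k, nl l <= nl (l ++ k).
Proof.
  induction l; intros k; simpl; [lia|].
  destruct (in_dec Nat.eq_dec a l), (in_dec Nat.eq_dec a (l ++ k)); specialize (IHl k); try lia.
  exfalso. apply n. apply in_or_app; auto.
Qed.

Lemma nl_le_perm : forall l K m, Permutation m (l ++ K) -> nl l <= nl m.
Proof. intros. rewrite (nl_perm _ _ H). apply nl_app_le. Qed.

Lemma nl_cons_notin : forall x l, ~ In x l -> nl (x :: l) = nl l.
Proof. intros. simpl. destruct (in_dec Nat.eq_dec x l); tauto. Qed.

Lemma nl_cons_in : forall x l, In x l -> nl (x :: l) = S (nl l).
Proof. intros. simpl. destruct (in_dec Nat.eq_dec x l); tauto. Qed.

Definition wsum (l : list atom) : nat := list_sum (map (fun a => 2 * asize a) l).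
Definition pv (l : list atom) : list nat := flat_map avars l.
Definition Wc (c : cclause) : nat :=
  2 ^ wsum (pos (fst c)) * S (nl (pv (pos (fst c)))).

Lemma wsum_perm : forall l m, Permutation l m -> wsum l = wsum m.
Proof. intros. unfold wsum. apply Permutation_list_sum. apply Permutation_map. auto. Qed.
Lemma wsum_app : forall l m, wsum (l ++ m) = wsum l + wsum m.
Proof. intros. unfold wsum. rewrite map_app, list_sum_app. auto. Qed.
Lemma wsum_cons : forall a l, wsum (a :: l) = 2 * asize a + wsum l.
Proof. auto. Qed.
Lemma pv_perm : forall l m, Permutation l m -> Permutation (pv l) (pv m).
Proof. intros. unfold pv. apply Permutation_flat_map. auto. Qed.
Lemma pv_app : forall l m, pv (l ++ m) = pv l ++ pv m.
Proof. intros. unfold pv. apply flat_map_app. Qed.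
Lemma pv_cons : forall a l, pv (a :: l) = avars a ++ pv l.
Proof. auto. Qed.

Definition cnt := count_occ Nat.eq_dec.
Lemma perm_cnt : forall l m, Permutation l m -> forall y, cnt l y = cnt m y.
Proof. intros. apply (Permutation_count_occ Nat.eq_dec). auto. Qed.
Lemma cnt_perm : forall l m, (forall y, cnt l y = cnt m y) -> Permutation l m.
Proof. intros. apply (Permutation_count_occ Nat.eq_dec). auto. Qed.
Lemma cnt_app : forall l m y, cnt (l ++ m) y = cnt l y + cnt m y.
Proof. intros. apply count_occ_app. Qed.
Lemma cnt_cons : forall a l y, cnt (a :: l) y = cnt [a] y + cnt l y.
Proof. intros. change (a :: l) with ([a] ++ l). apply cnt_app. Qed.

Lemma pow_lt : forall a b c n, a + 2 <= c -> b + 2 <= c ->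
  2 ^ a * S n + 2 ^ b * S n < 2 ^ c * S n.
Proof.
  intros a b c n Ha Hb.
  assert (2 ^ (a + 2) <= 2 ^ c) by (apply Nat.pow_le_mono_r; lia).
  assert (2 ^ (b + 2) <= 2 ^ c) by (apply Nat.pow_le_mono_r; lia).
  rewrite Nat.pow_add_r in *. simpl in *.
  assert (0 < 2 ^ a) by (apply Nat.neq_0_lt_0, Nat.pow_nonzero; lia).
  rewrite <- Nat.mul_add_distr_r. apply Nat.mul_lt_mono_pos_r; lia.
Qed.

Lemma pv_in : forall l a y, In a l -> In y (avars a) -> In y (pv l).
Proof. intros. unfold pv. apply in_flat_map. eauto. Qed.

Lemma pv_in_inv : forall l y, In y (pv l) -> exists a, In a l /\ In y (avars a).
Proof. intros. unfold pv in H. apply in_flat_map in H. auto. Qed.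

Lemma sh_dec : forall G Dfull D Gl Gr Dl Dr E p s x S pi,
  Permutation Dfull (E :: D) -> atom_at E p = Some s -> length p = 2 -> ~ is_var s ->
  ~ In x (ccvars (Cl G Dfull, pi)) -> munion Dl Dr D ->
  Wc (Cl (Atom S [Var x] :: Gl) (atom_replace E p (Var x) :: Dl), pi) +
  Wc (Cl Gr (Atom S [s] :: Dr), pi) < Wc (Cl G Dfull, pi).
Proof.
  intros G Dfull D Gl Gr Dl Dr E p s x S pi HD Hp Hl Hnv Hx Hm.
  unfold Wc. cbn [fst pos].
  destruct (munion_sub _ _ _ Hm) as [[K1 HK1] [K2 HK2]].
  destruct (atom_at_vars E p s Hp) as [A [B [HvE HvE1]]].
  pose proof (atom_at_size E p s (Var x) Hp) as Hsz. simpl tsize in Hsz.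
  pose proof (atom_at_depth2 E p s Hp Hl) as Hdp.
  assert (Hs1 : 1 <= tsize s) by (destruct s; [exfalso; apply Hnv; eexists; eauto|simpl; lia]).
  assert (W0 : wsum Dfull = 2 * asize E + wsum D) by (rewrite (wsum_perm _ _ HD); auto).
  assert (W1 : wsum D = wsum Dl + wsum K1) by (rewrite (wsum_perm _ _ HK1), wsum_app; auto).
  assert (W2 : wsum D = wsum Dr + wsum K2) by (rewrite (wsum_perm _ _ HK2), wsum_app; auto).
  rewrite !wsum_cons. simpl asize at 2.
  assert (C0 : forall y, cnt (pv Dfull) y = cnt (avars E) y + cnt (pv D) y)
    by (intro y; rewrite (perm_cnt _ _ (pv_perm _ _ HD)), pv_cons, cnt_app; auto).
  assert (C1 : forall y, cnt (pv D) y = cnt (pv Dl) y + cnt (pv K1) y)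
    by (intro y; rewrite (perm_cnt _ _ (pv_perm _ _ HK1)), pv_app, cnt_app; auto).
  assert (C2 : forall y, cnt (pv D) y = cnt (pv Dr) y + cnt (pv K2) y)
    by (intro y; rewrite (perm_cnt _ _ (pv_perm _ _ HK2)), pv_app, cnt_app; auto).
  assert (HinD : forall a, In a D -> In a Dfull) by (intros a Ha; eapply perm_in; eauto; right; auto).
  assert (N1 : nl (pv (atom_replace E p (Var x) :: Dl)) <= nl (pv Dfull)).
  { rewrite pv_cons, HvE1.
    rewrite (nl_perm _ (x :: (A ++ B ++ pv Dl))).
    - rewrite nl_cons_notin.
      + apply (nl_le_perm _ (tvars s ++ pv K1)). apply cnt_perm. intro y.
        rewrite C0, HvE, C1. rewrite !cnt_app. lia.
      + intro Hin. apply Hx. apply in_app_or in Hin. destruct Hin as [Hin|Hin].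
        { eapply ccv_pos with (a := E). simpl. eapply perm_in; eauto. left; auto.
          rewrite HvE. apply in_or_app; auto. }
        apply in_app_or in Hin. destruct Hin as [Hin|Hin].
        { eapply ccv_pos with (a := E). simpl. eapply perm_in; eauto. left; auto.
          rewrite HvE. apply in_or_app; right. apply in_or_app; auto. }
        apply pv_in_inv in Hin. destruct Hin as [a [Ha Hy]].
        eapply ccv_pos with (a := a); auto. simpl. apply HinD.
        destruct (munion_incl _ _ _ Hm) as [H1 _]. auto.
    - apply cnt_perm. intro y. rewrite cnt_cons. simpl tvars. rewrite !cnt_app.
      rewrite (cnt_cons x []). lia. }
  assert (N2 : nl (pv (Atom S [s] :: Dr)) <= nl (pv Dfull)).
  { rewrite pv_cons. apply (nl_le_perm _ (A ++ B ++ pv K2)). apply cnt_perm. intro y.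
    rewrite C0, HvE, C2. simpl avars. rewrite !cnt_app. simpl. lia. }
  eapply Nat.le_lt_trans.
  - apply Nat.add_le_mono; apply Nat.mul_le_mono_l; apply le_n_S; [apply N1|apply N2].
  - apply pow_lt; lia.
Qed.

Lemma li1_dec : forall G G' Dfull D E' E p q x x' pi pi',
  Permutation Dfull (E' :: E :: D) -> atom_at E' p = Some (Var x) ->
  atom_at E q = Some (Var x) -> ~ In x' (ccvars (Cl G Dfull, pi)) ->
  Wc (Cl G' (E' :: atom_replace E q (Var x') :: D), pi') < Wc (Cl G Dfull, pi).
Proof.
  intros G G' Dfull D E' E p q x x' pi pi' HD Hp Hq Hx'.
  unfold Wc. cbn [fst pos].
  destruct (atom_at_vars E q (Var x) Hq) as [A [B [HvE HvE2]]].
  pose proof (atom_at_size E q (Var x) (Var x') Hq) as Hsz. simpl tsize in Hsz.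
  assert (W0 : wsum Dfull = wsum (E' :: E :: D)) by (apply wsum_perm; auto).
  rewrite W0, !wsum_cons.
  replace (asize (atom_replace E q (Var x'))) with (asize E) by lia.
  set (R := avars E' ++ A ++ B ++ pv D).
  assert (P1 : Permutation (pv Dfull) (x :: R)).
  { apply cnt_perm. intro y. rewrite (perm_cnt _ _ (pv_perm _ _ HD)).
    rewrite !pv_cons, HvE. unfold R. rewrite cnt_cons. simpl tvars. rewrite !cnt_app.
    rewrite (cnt_cons x []). lia. }
  assert (P2 : Permutation (pv (E' :: atom_replace E q (Var x') :: D)) (x' :: R)).
  { apply cnt_perm. intro y.
    rewrite !pv_cons, HvE2. unfold R. rewrite cnt_cons. simpl tvars. rewrite !cnt_app.
    rewrite (cnt_cons x' []). lia. }
  rewrite (nl_perm _ _ P1), (nl_perm _ _ P2).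
  enough (Hn1 : ~ In x' R) . enough (Hn2 : In x R).
  rewrite (nl_cons_notin x' R Hn1), (nl_cons_in x R Hn2).
  { apply Nat.mul_lt_mono_pos_l. apply Nat.neq_0_lt_0, Nat.pow_nonzero; lia. lia. }
  all: swap 1 2.
  - intro Hin. apply Hx'.
    assert (Hin2 : In x' (pv Dfull)) by (apply (Permutation_in _ (Permutation_sym P1)); right; auto).
    apply pv_in_inv in Hin2. destruct Hin2 as [a [Ha Hy]].
      eapply ccv_pos with (a := a); eauto.
  - unfold R. apply in_or_app. left. eapply atom_at_in; eauto. simpl; auto.
Qed.

Lemma li2_dec : forall G G' Dfull D E p q x x' pi pi',
  Permutation Dfull (E :: D) -> atom_at E p = Some (Var x) ->
  atom_at E q = Some (Var x) -> p <> q -> ~ In x' (ccvars (Cl G Dfull, pi)) ->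
  Wc (Cl G' (atom_replace E q (Var x') :: D), pi') < Wc (Cl G Dfull, pi).
Proof.
  intros G G' Dfull D E p q x x' pi pi' HD Hp Hq Hpq Hx'.
  unfold Wc. cbn [fst pos].
  destruct (atom_at_vars E q (Var x) Hq) as [A [B [HvE HvE2]]].
  pose proof (atom_at_size E q (Var x) (Var x') Hq) as Hsz. simpl tsize in Hsz.
  assert (W0 : wsum Dfull = wsum (E :: D)) by (apply wsum_perm; auto).
  rewrite W0, !wsum_cons.
  replace (asize (atom_replace E q (Var x'))) with (asize E) by lia.
  set (R := A ++ B ++ pv D).
  assert (P1 : Permutation (pv Dfull) (x :: R)).
  { apply cnt_perm. intro y. rewrite (perm_cnt _ _ (pv_perm _ _ HD)).
    rewrite !pv_cons, HvE. unfold R. rewrite cnt_cons. simpl tvars. rewrite !cnt_app.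
    rewrite (cnt_cons x []). lia. }
  assert (P2 : Permutation (pv (atom_replace E q (Var x') :: D)) (x' :: R)).
  { apply cnt_perm. intro y.
    rewrite !pv_cons, HvE2. unfold R. rewrite cnt_cons. simpl tvars. rewrite !cnt_app.
    rewrite (cnt_cons x' []). lia. }
  assert (HxE : In x (ccvars (Cl G Dfull, pi))).
  { eapply ccv_pos with (a := E). simpl. eapply perm_in; eauto. left; auto.
    eapply atom_at_in; eauto. simpl; auto. }
  rewrite (nl_perm _ _ P1), (nl_perm _ _ P2).
  enough (Hn1 : ~ In x' R) . enough (Hn2 : In x R).
  rewrite (nl_cons_notin x' R Hn1), (nl_cons_in x R Hn2).
  { apply Nat.mul_lt_mono_pos_l. apply Nat.neq_0_lt_0, Nat.pow_nonzero; lia. lia. }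
  all: swap 1 2.
  - intro Hin. apply Hx'.
    assert (Hin2 : In x' (pv Dfull)) by (apply (Permutation_in _ (Permutation_sym P1)); right; auto).
    apply pv_in_inv in Hin2. destruct Hin2 as [a [Ha Hy]].
      eapply ccv_pos with (a := a); eauto.
  - pose proof (atom_at_other E p q x x (Var x') Hp Hq Hpq) as Ho.
    pose proof (atom_at_in _ _ _ x Ho (or_introl eq_refl)) as Hin.
    rewrite HvE2 in Hin. unfold R.
    apply in_app_or in Hin. destruct Hin as [Hin|Hin].
    + apply in_or_app; auto.
    + simpl in Hin. destruct Hin as [Hin|Hin].
      * subst. contradiction.
      * apply in_or_app; right; apply in_or_app; auto.
Qed.

Definition rep (N : cset) (l : list cclause) : Prop := forall d, N d <-> In d l.

Lemma fin_sub : forall (N : cset) m, (forall d, N d -> In d m) ->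
  exists l, NoDup l /\ rep N l.
Proof.
  intros N m Hm.
  assert (G : forall m, exists l, NoDup l /\ forall d, (N d /\ In d m) <-> In d l).
  { clear. induction m as [|a m IH].
    - exists []. split; [constructor|]. intros d; simpl; tauto.
    - destruct IH as [l [Hl Hr]].
      destruct (classic (N a /\ ~ In a l)) as [[Ha Hna]|Hno].
      + exists (a :: l). split; [constructor; auto|]. intros d. simpl. rewrite <- Hr.
        split; [intros [Hd [->|Hd']]; auto|]. intros [<-|[Hd Hd']]; auto.
      + exists l. split; auto. intros d. simpl. rewrite <- Hr. split.
        * intros [Hd [<-|Hd']]; auto. split; auto. apply NNPP. intro Hn. apply Hno. split; auto.
          intro Hi. apply Hn. apply Hr in Hi. tauto.
        * intros [Hd Hd']; auto. }
  destruct (G m) as [l [Hl Hr]]. exists l. split; auto. intros d. rewrite <- Hr.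
  split; [intros Hd; split; auto|tauto].
Qed.

Lemma sum_incl {X} (f : X -> nat) : forall l m, NoDup l -> incl l m ->
  list_sum (map f l) <= list_sum (map f m).
Proof.
  induction l as [|a l IH]; intros m Hnd Hi; simpl; [lia|].
  inversion Hnd; subst.
  assert (Ha : In a m) by (apply Hi; left; auto).
  destruct (in_split a m Ha) as [m1 [m2 ->]].
  rewrite map_app, list_sum_app. simpl.
  assert (list_sum (map f l) <= list_sum (map f (m1 ++ m2))).
  { apply IH; auto. intros y Hy. assert (In y (m1 ++ a :: m2)) by (apply Hi; right; auto).
    apply in_app_or in H. apply in_or_app. destruct H as [H|[H|H]]; auto. subst; contradiction. }
  rewrite map_app, list_sum_app in H. lia.
Qed.

Definition sumW (l : list cclause) : nat := list_sum (map Wc l).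

Lemma replace_dec : forall N c news N' l, replace_cl N c news N' -> rep N l ->
  sumW news < Wc c -> exists l', rep N' l' /\ sumW l' < sumW l.
Proof.
  intros N c news N' l [Hc HN'] Hl Hlt.
  assert (Hcl : In c l) by (apply Hl; auto).
  destruct (in_split c l Hcl) as [l1 [l2 ->]].
  destruct (fin_sub N' (l1 ++ l2 ++ news)) as [l' [Hnd Hr]].
  { intros d Hd. apply HN' in Hd. destruct Hd as [[Hd Hne]|Hd].
    - apply Hl in Hd. apply in_app_or in Hd. destruct Hd as [Hd|[Hd|Hd]].
      + apply in_or_app; auto.
      + congruence.
      + apply in_or_app; right; apply in_or_app; auto.
    - apply in_or_app; right; apply in_or_app; auto. }
  exists l'. split; auto.
  assert (sumW l' <= sumW (l1 ++ l2 ++ news)).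
  { apply sum_incl; auto. intros d Hd. apply Hr in Hd. apply HN' in Hd.
    destruct Hd as [[Hd Hne]|Hd].
    - apply Hl in Hd. apply in_app_or in Hd. destruct Hd as [Hd|[Hd|Hd]].
      + apply in_or_app; auto.
      + congruence.
      + apply in_or_app; right; apply in_or_app; auto.
    - apply in_or_app; right; apply in_or_app; auto. }
  unfold sumW in *. rewrite !map_app, !list_sum_app in *. simpl. lia.
Qed.

Lemma replace_fin : forall N c news N' l, replace_cl N c news N' -> rep N l ->
  exists l', NoDup l' /\ rep N' l'.
Proof.
  intros N c news N' l [Hc HN'] Hl. apply (fin_sub N' (l ++ news)).
  intros d Hd. apply HN' in Hd. destruct Hd as [[Hd _]|Hd]; apply in_or_app; [left|right]; auto.
  apply Hl; auto.
Qed.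

Lemma step_fin : forall T fP k N N' l, ap_step T fP k N N' -> rep N l ->
  exists l', NoDup l' /\ rep N' l'.
Proof.
  intros T fP k N N' l H Hl. destruct k; simpl in H.
  - destruct H as [C [pi [x [t [_ [_ [_ H]]]]]]]. eapply replace_fin; eauto.
  - destruct H as [P [n [_ [_ HN']]]].
    apply (fin_sub N' (map (proj_cc T P n (fP P n)) l)).
    intros d Hd. apply HN' in Hd. destruct Hd as [c [Hc ->]]. apply in_map. apply Hl; auto.
  - destruct H as [H _].
    destruct H as [G [Dfull [D [Gl [Gr [Dl [Dr [E [p [s [x [S [pi H]]]]]]]]]]]]].
    cbv zeta in H. destruct H as [_ [_ [_ [_ [_ [_ [_ [_ [_ [_ H]]]]]]]]]].
    eapply replace_fin; eauto.
  - destruct H as [[H|H] _].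
    + destruct H as [G [Dfull [D [E' [E [p [q [x [x' [pi H]]]]]]]]]]. cbv zeta in H.
      destruct H as [_ [_ [_ [_ H]]]]. eapply replace_fin; eauto.
    + destruct H as [G [Dfull [D [E [p [q [x [x' [pi H]]]]]]]]]. cbv zeta in H.
      destruct H as [_ [_ [_ [_ [_ H]]]]]. eapply replace_fin; eauto.
Qed.

Definition nonmono (N : cset) : Prop := exists P n, n <> 1 /\ pred_occurs N (P, n).

Lemma mo_ex : forall T fP N, nonmono N -> exists M, mo_step T fP N M.
Proof.
  intros T fP N [P [n [Hn Ho]]].
  exists (fun d => exists c, N c /\ d = proj_cc T P n (fP P n) c).
  exists P, n. split; auto. split; auto. tauto.
Qed.

Lemma preds_inv : forall d Pn, In Pn (ccpreds d) ->
  exists b, (In b (neg (fst d)) \/ In b (pos (fst d))) /\ apred b = Pn.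
Proof.
  intros d Pn H. unfold ccpreds in H. apply in_app_or in H.
  destruct H as [H|H]; apply in_map_iff in H; destruct H as [b [<- Hb]]; eauto.
Qed.

Lemma preds_in : forall d b, (In b (neg (fst d)) \/ In b (pos (fst d))) ->
  In (apred b) (ccpreds d).
Proof.
  intros d b [H|H]; unfold ccpreds; apply in_or_app; [left|right]; apply in_map; auto.
Qed.

Lemma apred_asubst : forall s a, apred (asubst s a) = apred a.
Proof. intros s [P ts]. simpl. rewrite length_map. auto. Qed.

Lemma no_nonmono_news : forall N c news N', replace_cl N c news N' -> ~ nonmono N ->
  (forall d, In d news -> forall b, (In b (neg (fst d)) \/ In b (pos (fst d))) ->
     snd (apred b) = 1 \/
     exists b', (In b' (neg (fst c)) \/ In b' (pos (fst c))) /\ apred b' = apred b) ->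
  ~ nonmono N'.
Proof.
  intros N c news N' [Hc HN'] Hnm Hnews [P [n [Hn [d [Hd Hin]]]]].
  apply HN' in Hd. destruct Hd as [[Hd _]|Hd].
  - apply Hnm. exists P, n. split; auto. exists d; auto.
  - destruct (preds_inv d _ Hin) as [b [Hb Heq]].
    destruct (Hnews d Hd b Hb) as [H1|[b' [Hb' Heq']]].
    + rewrite Heq in H1. simpl in H1. contradiction.
    + apply Hnm. exists P, n. split; auto. exists c. split; auto.
      rewrite <- Heq, <- Heq'. apply preds_in; auto.
Qed.

Lemma sh_phase2 : forall N N' l, sh_step N N' -> ~ nonmono N -> rep N l ->
  exists l', rep N' l' /\ sumW l' < sumW l /\ ~ nonmono N'.
Proof.
  intros N N' l H Hnm Hl.
  destruct H as [G [Dfull [D [Gl [Gr [Dl [Dr [E [p [s [x [S [pi H]]]]]]]]]]]]].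
  cbv zeta in H.
  destruct H as [HD [Hp [Hlp [Hnv [Hx [_ [HmG [HmD [_ [_ Hrep]]]]]]]]]].
  destruct (replace_dec _ _ _ _ l Hrep Hl) as [l' [Hr' Hlt]].
  { unfold sumW. simpl. pose proof (sh_dec G Dfull D Gl Gr Dl Dr E p s x S pi HD Hp Hlp Hnv Hx HmD). lia. }
  exists l'. split; auto. split; auto.
  destruct (munion_incl _ _ _ HmG) as [HGl HGr].
  destruct (munion_incl _ _ _ HmD) as [HDl HDr].
  assert (HinD : forall a, In a D -> In a Dfull).
  { intros a Ha. eapply perm_in; eauto. right; auto. }
  assert (HinE : In E Dfull) by (eapply perm_in; eauto; left; auto).
  eapply no_nonmono_news; eauto.
  intros d [<-|[<-|[]]] b Hb; simpl in Hb.
  - destruct Hb as [[<-|Hb]|[<-|Hb]].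
    + left. auto.
    + right. exists (asubst (upd x s) b). split. left. simpl. apply HGl. apply in_map; auto.
      apply apred_asubst.
    + right. exists E. split. right; auto. symmetry; apply atom_replace_pred.
    + right. exists b. split; [|reflexivity]; right; simpl; auto.
  - destruct Hb as [Hb|[<-|Hb]].
    + right. exists b. split; [|reflexivity]; left; simpl; auto.
    + left. auto.
    + right. exists b. split; [|reflexivity]; right; simpl; auto.
Qed.

Lemma li_phase2 : forall N N' l, li_step N N' -> ~ nonmono N -> rep N l ->
  exists l', rep N' l' /\ sumW l' < sumW l /\ ~ nonmono N'.
Proof.
  intros N N' l [H|H] Hnm Hl.
  - destruct H as [G [Dfull [D [E' [E [p [q [x [x' [pi H]]]]]]]]]]. cbv zeta in H.
    destruct H as [HD [Hp [Hq [Hx' Hrep]]]].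
    destruct (replace_dec _ _ _ _ l Hrep Hl) as [l' [Hr' Hlt]].
    { unfold sumW. simpl. rewrite Nat.add_0_r; eapply li1_dec; eauto. }
    exists l'. split; auto. split; auto.
    eapply no_nonmono_news; eauto.
    intros d [<-|[]] b Hb; simpl in Hb. right.
    destruct Hb as [Hb|[<-|[<-|Hb]]].
    + apply in_app_or in Hb. destruct Hb as [Hb|Hb].
      * apply in_map_iff in Hb. destruct Hb as [b' [<- Hb]]. exists b'. split; auto.
        symmetry; apply apred_asubst.
      * exists b; auto.
    + exists E'. split; auto. right. simpl. eapply perm_in; eauto. left; auto.
    + exists E. split. right. simpl. eapply perm_in; eauto. right; left; auto.
      symmetry; apply atom_replace_pred.
    + exists b. split; auto. right. simpl. eapply perm_in; eauto. right; right; auto.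
  - destruct H as [G [Dfull [D [E [p [q [x [x' [pi H]]]]]]]]]. cbv zeta in H.
    destruct H as [HD [Hp [Hq [Hpq [Hx' Hrep]]]]].
    destruct (replace_dec _ _ _ _ l Hrep Hl) as [l' [Hr' Hlt]].
    { unfold sumW. simpl. rewrite Nat.add_0_r; apply (li2_dec G _ Dfull D E p q x x'); auto. }
    exists l'. split; auto. split; auto.
    eapply no_nonmono_news; eauto.
    intros d [<-|[]] b Hb; simpl in Hb. right.
    destruct Hb as [Hb|[<-|Hb]].
    + apply in_app_or in Hb. destruct Hb as [Hb|Hb].
      * apply in_map_iff in Hb. destruct Hb as [b' [<- Hb]]. exists b'. split; auto.
        symmetry; apply apred_asubst.
      * exists b; auto.
    + exists E. split. right. simpl. eapply perm_in; eauto. left; auto.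
      symmetry; apply atom_replace_pred.
    + exists b. split; auto. right. simpl. eapply perm_in; eauto. right; auto.
Qed.

Definition pdec : forall x y : nat * nat, {x = y} + {x <> y}.
Proof. decide equality; apply Nat.eq_dec. Defined.

Definition covers (L : list (nat * nat)) (N : cset) : Prop :=
  forall P n, n <> 1 -> pred_occurs N (P, n) -> In (P, n) L.

Lemma mo_cover : forall T fP N N' L, mo_step T fP N N' -> covers L N ->
  exists L', length L' < length L /\ covers L' N'.
Proof.
  intros T fP N N' L [P [n [Hn [Ho HN']]]] Hc.
  exists (remove pdec (P, n) L). split.
  - apply remove_length_lt. apply Hc; auto.
  - intros Q m Hm [d [Hd Hin]]. apply HN' in Hd. destruct Hd as [c [Hc0 ->]].
    destruct (preds_inv _ _ Hin) as [b [Hb Heq]].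
    assert (Hgen : forall a, (In a (neg (fst c)) \/ In a (pos (fst c))) ->
      apred (proj_atom T P n (fP P n) a) = (Q, m) -> In (Q, m) (remove pdec (P, n) L)).
    { intros [R ts] Ha Heq'. unfold proj_atom in Heq'.
      destruct (andb (Nat.eqb R P) (Nat.eqb (length ts) n)) eqn:Em.
      - simpl in Heq'. inversion Heq'. subst. contradiction.
      - simpl in Heq'. inversion Heq'; subst. apply in_in_remove.
        + intro He. inversion He; subst. rewrite !Nat.eqb_refl in Em. discriminate.
        + apply Hc; auto. exists c. split; auto. apply (preds_in c (Atom Q ts)); auto. }
    simpl in Hb. destruct Hb as [Hb|Hb]; apply in_map_iff in Hb; destruct Hb as [a [<- Ha]];
      apply (Hgen a); auto.
Qed.

Lemma part1 : forall (N : cset) (T : nat) (fP : nat -> nat -> nat),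
  finite_cset N ->
  ~ exists (seq : nat -> cset) (ks : nat -> rule_kind),
        (forall c, seq 0 c <-> N c) /\
        (forall i, ap_step T fP (ks i) (seq i) (seq (S i))) /\
        (exists n0, forall i, n0 <= i -> ks i <> KRef).
Proof.
  intros N T fP [l0 Hl0] [sq [ks [H0 [Hst [n0 Hn0]]]]].
  assert (Fin : forall i, exists l, NoDup l /\ rep (sq i) l).
  { induction i as [|i [l [_ Hl]]].
    - apply (fin_sub _ l0). intros d Hd. apply Hl0. apply H0. auto.
    - eapply step_fin; eauto. }
  assert (Cls : forall i, n0 <= i ->
     mo_step T fP (sq i) (sq (S i)) \/
     (~ nonmono (sq i) /\ (sh_step (sq i) (sq (S i)) \/ li_step (sq i) (sq (S i))))).
  { intros i Hi. specialize (Hst i). specialize (Hn0 i Hi).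
    destruct (ks i); simpl in Hst.
    - congruence.
    - left; auto.
    - destruct Hst as [Hs Hm]. right. split; auto. intro Hnm. apply Hm. apply mo_ex; auto.
    - destruct Hst as [Hs [Hm _]]. right. split; auto. intro Hnm. apply Hm. apply mo_ex; auto. }
  assert (Ph1 : forall k i L, n0 <= i -> length L <= k -> covers L (sq i) ->
     exists j, n0 <= j /\ ~ nonmono (sq j)).
  { induction k as [|k IH]; intros i L Hi HL Hc;
    (destruct (classic (nonmono (sq i))) as [Hnm|Hnm]; [|exists i; auto]).
    - destruct Hnm as [P [n [Hn Ho]]]. specialize (Hc P n Hn Ho).
      destruct L; simpl in *; [destruct Hc|lia].
    - destruct (Cls i Hi) as [Hmo|[Hn _]]; [|contradiction].
      destruct (mo_cover _ _ _ _ _ Hmo Hc) as [L' [HL' Hc']].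
      apply (IH (S i) L'); auto; lia. }
  destruct (Fin n0) as [ln0 [_ Hln0]].
  destruct (Ph1 (length (flat_map ccpreds ln0)) n0 (flat_map ccpreds ln0)) as [j [Hj Hnj]]; auto.
  { intros P n Hn [d [Hd Hin]]. apply in_flat_map. exists d. split; auto. apply Hln0; auto. }
  assert (Ph2 : forall m i l, n0 <= i -> ~ nonmono (sq i) -> rep (sq i) l -> sumW l <= m -> False).
  { induction m as [|m IH]; intros i l Hi Hnm Hl Hm;
    (destruct (Cls i Hi) as [Hmo|[_ [Hs|Hs]]];
     [destruct Hmo as [P [n [Hn [Ho _]]]]; apply Hnm; exists P, n; auto
     |destruct (sh_phase2 _ _ l Hs Hnm Hl) as [l' [Hr' [Hlt Hnm']]]
     |destruct (li_phase2 _ _ l Hs Hnm Hl) as [l' [Hr' [Hlt Hnm']]]]);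
    try lia; apply (IH (S i) l'); auto; lia. }
  destruct (Fin j) as [lj [_ Hlj]].
  apply (Ph2 (sumW lj) j lj); auto.
Qed.

Theorem lemma6 (N : cset) (T : nat) (fP : nat -> nat -> nat) :
  finite_cset N ->
  (forall c, N c -> wf_constr (snd c)) ->
  fresh_params N T fP ->
  (~ exists (seq : nat -> cset) (ks : nat -> rule_kind),
        (forall c, seq 0 c <-> N c) /\
        (forall i, ap_step T fP (ks i) (seq i) (seq (S i))) /\
        (exists n0, forall i, n0 <= i -> ks i <> KRef)) /\
  (forall (k : rule_kind) (N' : cset),
      ap_step T fP k N N' -> satisfiable N' -> satisfiable N).
Proof.
  intros Hfin _ _. split.
  - apply part1; auto.
  - intros k N'. apply part2.
Qed.
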